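(* Let $\mathcal M\subseteq\bigcup_{K\ge1}\mathcal F_K\times\mathcal Q_K$ satisfy: (1) $K(F)<M$ for all $(F,Q)\in\mathcal M$; (2) for every $(F,Q)\in\mathcal M$, $\mathcal F_{K(F)}^{\mathrm{an}}\times\{Q\}\subseteq\mathcal M$. Then $\mathcal M$ is identifiable if and only if (a) for all $(F^1,Q^1),(F^2,Q^2)\in\mathcal M$ with $F^1Q^1=F^2Q^2$ we have $\mathrm{cone}(Q^1)=\mathrm{cone}(Q^2)$, and (b) for every $(F,Q)\in\mathcal M$ the rows of $Q$ are linearly independent.
   Context: Fix positive integers $M$ and $N$. For a positive integer $K$, $\mathcal F_K$ is the set of real $M\times K$ matrices with all entries in $[0,1]$, and $\mathcal Q_K$ is the set of real $K\times N$ matrices with entries in $[0,1]$ each of whose columns sums to $1$. $K(F)$ is the number of columns of $F$. $\mathcal F_K^{\mathrm{an}}$ is the set of $F\in\mathcal F_K$ such that for every $k\in\{1,\dots,K\}$ there is a row $s$ with $F_{sk}>0$ and $F_{s\ell}=0$ for all $\ell\ne k$. For a matrix $A$ with nonnegative entries, $\mathrm{cone}(A)$ is the set of all linear combinations with nonnegative coefficients of the rows of $A$. $(F^1,Q^1)\sim(F^2,Q^2)$ means $F^1,F^2$ have the same number $K$ of columns and there is a permutation $\pi$ of $\{1,\dots,K\}$ with $F^2_{sk}=F^1_{s\pi(k)}$ and $Q^2_{ki}=Q^1_{\pi(k)i}$ for all $s,k,i$. $\mathcal M$ is identifiable if for all $(F^1,Q^1),(F^2,Q^2)\in\mathcal M$,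 $F^1Q^1=F^2Q^2$ implies $(F^1,Q^1)\sim(F^2,Q^2)$. *)

(* Defs.v *)
From HB Require Import structures.
From mathcomp Require Import all_boot all_order all_algebra.
From mathcomp Require Import reals.
Set Implicit Arguments. Unset Strict Implicit. Unset Printing Implicit Defensive.
Import Order.TTheory GRing.Theory Num.Theory.
Local Open Scope ring_scope.

Definition inF (R : realType) (M K : nat) (F : 'M[R]_(M, K)) : Prop :=
  forall s k, 0 <= F s k <= 1.

Definition inQ (R : realType) (K N : nat) (Q : 'M[R]_(K, N)) : Prop :=
  (forall k i, 0 <= Q k i <= 1) /\ (forall i, \sum_(k < K) Q k i = 1).

Definition inFan (R : realType) (M K : nat) (F : 'M[R]_(M, K)) : Prop :=
  inF F /\
  forall k : 'I_K, exists s : 'I_M, 0 < F s k /\ forall l : 'I_K, l != k -> F s l = 0.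

Definition in_cone (R : realType) (K N : nat) (A : 'M[R]_(K, N)) (v : 'rV[R]_N) : Prop :=
  exists c : 'rV[R]_K, (forall k, 0 <= c 0 k) /\ v = c *m A.

Definition model (R : realType) (M N : nat) :=
  forall K : nat, 'M[R]_(M, K) -> 'M[R]_(K, N) -> Prop.

(* (F1,Q1) ~ (F2,Q2): a bijection pi : 'I_K2 -> 'I_K1 (forcing K1 = K2)
   with F2_{sk} = F1_{s pi(k)} and Q2_{ki} = Q1_{pi(k) i}. *)
Definition equiv_pair (R : realType) (M N K1 K2 : nat)
  (F1 : 'M[R]_(M, K1)) (Q1 : 'M[R]_(K1, N))
  (F2 : 'M[R]_(M, K2)) (Q2 : 'M[R]_(K2, N)) : Prop :=
  exists pi : 'I_K2 -> 'I_K1, bijective pi /\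
    (forall s k, F2 s k = F1 s (pi k)) /\ (forall k i, Q2 k i = Q1 (pi k) i).

Definition identifiable (R : realType) (M N : nat) (Mod : model R M N) : Prop :=
  forall K1 (F1 : 'M[R]_(M, K1)) Q1 K2 (F2 : 'M[R]_(M, K2)) Q2,
    Mod K1 F1 Q1 -> Mod K2 F2 Q2 -> F1 *m Q1 = F2 *m Q2 ->
    equiv_pair F1 Q1 F2 Q2.

(* Main.v *)
Require Import Defs.
From HB Require Import structures.
From mathcomp Require Import all_boot all_order all_algebra.
From mathcomp Require Import reals.
From mathcomp Require Import ring lra.
Import Order.TTheory GRing.Theory Num.Theory.
Local Open Scope ring_scope.

Lemma monomial (R : realType) n m (A : 'M[R]_(n,m)) (B : 'M[R]_(m,n)) :
  (forall i j, 0 <= A i j) -> (forall i j, 0 <= B i j) ->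
  A *m B = 1%:M -> B *m A = 1%:M ->
  exists f : 'I_n -> 'I_m, injective f /\ (forall i, 0 < A i (f i)) /\
    (forall i j, j != f i -> A i j = 0).
Proof.
move=> A0 B0 AB BA.
have E1 i l : \sum_j A i j * B j l = (i == l)%:R.
  by have := congr1 (fun X : 'M[R]_n => X i l) AB; rewrite !mxE.
have E2 i l : \sum_j B i j * A j l = (i == l)%:R.
  by have := congr1 (fun X : 'M[R]_m => X i l) BA; rewrite !mxE.
have ex i : exists j, 0 < A i j /\ 0 < B j i.
  case: (pickP (fun j => (0 < A i j) && (0 < B j i))) => [j /andP[h1 h2]|h].
    by exists j.
  have := E1 i i; rewrite eqxx big1 //.
    by move/eqP; rewrite eq_sym oner_eq0.
  move=> j _; have := h j; have := A0 i j; have := B0 j i.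
  rewrite !le0r => /orP[/eqP->|->]; first by rewrite mulr0.
  by case/orP=> [/eqP->|->] //; rewrite mul0r.
have [f hf] := fin_all_exists ex.
have rowA i j : j != f i -> A i j = 0.
  move=> ne; have := E2 (f i) j; rewrite eq_sym (negbTE ne) => h.
  have := psumr_eq0P (fun l _ => mulr_ge0 (B0 (f i) l) (A0 l j)) h (isT : predT i).
  move/(_ i)/eqP; rewrite mulf_eq0 => /orP[/eqP e|/eqP] //.
  by have := (hf i).2; rewrite e ltxx.
have rowB i l : l != i -> B (f i) l = 0.
  move=> ne; have := E1 i l; rewrite eq_sym (negbTE ne) => h.
  have := psumr_eq0P (fun j _ => mulr_ge0 (A0 i j) (B0 j l)) h (isT : predT (f i)).
  move/(_ (f i))/eqP; rewrite mulf_eq0 => /orP[/eqP e|/eqP] //.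
  by have := (hf i).1; rewrite e ltxx.
exists f; split; last split.
- move=> i i' e; apply/eqP/negPn/negP => ne.
  have := rowB i i'; rewrite eq_sym ne => /(_ isT); rewrite e => h.
  by have := (hf i').2; rewrite h ltxx.
- by move=> i; exact: (hf i).1.
- exact: rowA.
Qed.

Lemma cone_mat (R : realType) N K K' (Qa : 'M[R]_(K,N)) (Qb : 'M[R]_(K',N)) :
  (forall v, in_cone Qa v <-> in_cone Qb v) ->
  exists A : 'M[R]_(K,K'), (forall i j, 0 <= A i j) /\ A *m Qb = Qa.
Proof.
move=> h.
have: forall k, exists c : 'rV[R]_K', (forall j, 0 <= c 0 j) /\ row k Qa = c *m Qb.
  move=> k; have [c [c0 e]] : in_cone Qb (row k Qa).
    apply/h; exists (delta_mx 0 k); split; last by rewrite rowE.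
    by move=> j; rewrite mxE ler0n.
  by exists c.
case/fin_all_exists => a ha; exists (\matrix_k a k); split.
  by move=> i j; rewrite mxE; exact: (ha i).1.
by apply/row_matrixP => k; rewrite row_mul rowK; symmetry; exact: (ha k).2.
Qed.

Lemma ones_mul (R : realType) K N (Q : 'M[R]_(K,N)) :
  inQ Q -> const_mx 1 *m Q = const_mx 1 :> 'rV[R]_N.
Proof.
move=> [_ s]; apply/matrixP => i j; rewrite !mxE.
under eq_bigr do rewrite mxE mul1r.
exact: s.
Qed.
Arguments monomial [R n m A B].
Arguments cone_mat [R N K K' Qa Qb].
Arguments ones_mul [R K N Q].
Lemma back_dir (R : realType) M N K1 K2 (F1 : 'M[R]_(M,K1)) (Q1 : 'M[R]_(K1,N))
  (F2 : 'M[R]_(M,K2)) (Q2 : 'M[R]_(K2,N)) :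
  inQ Q1 -> inQ Q2 -> row_free Q1 -> row_free Q2 ->
  (forall v, in_cone Q1 v <-> in_cone Q2 v) -> F1 *m Q1 = F2 *m Q2 ->
  equiv_pair F1 Q1 F2 Q2.
Proof.
move=> iq1 iq2 rf1 rf2 hc e.
have [A [A0 AQ]] := cone_mat (fun v => iff_sym (hc v)).
have [B [B0 BQ]] := cone_mat hc.
have AB : A *m B = 1%:M.
  by apply: (row_free_inj rf2); rewrite /= -mulmxA BQ AQ mul1mx.
have BA : B *m A = 1%:M.
  by apply: (row_free_inj rf1); rewrite /= -mulmxA AQ BQ mul1mx.
have [f [finj [fpos f0]]] := monomial A0 B0 AB BA.
have [g [ginj _]] := monomial B0 A0 BA AB.
have fbij : bijective f.
  apply: (inj_card_bij finj); have := leq_card g ginj; by rewrite !card_ord.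
have cs : const_mx 1 *m A = const_mx 1 :> 'rV[R]_K1.
  by apply: (row_free_inj rf1); rewrite /= -mulmxA AQ !ones_mul.
have A1 i : A i (f i) = 1.
  have := congr1 (fun X : 'rV[R]_K1 => X 0 (f i)) cs; rewrite !mxE (bigD1 i) //=.
  rewrite mxE mul1r big1 ?addr0 // => l hl.
  by rewrite mxE mul1r f0 // (inj_eq finj) eq_sym.
exists f; split => //; split.
- have eF : F1 = F2 *m A.
    by apply: (row_free_inj rf1); rewrite /= -mulmxA AQ e.
  move=> s k; rewrite eF mxE (bigD1 k) //= A1 mulr1 big1 ?addr0 // => l hl.
  by rewrite f0 ?mulr0 // (inj_eq finj) eq_sym.
- move=> k i; rewrite -AQ mxE (bigD1 (f k)) //= A1 mul1r big1 ?addr0 // => j hj.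
  by rewrite f0 ?mul0r.
Qed.

Lemma cone_perm (R : realType) M N K1 K2 (F1 : 'M[R]_(M,K1)) (Q1 : 'M[R]_(K1,N))
  (F2 : 'M[R]_(M,K2)) (Q2 : 'M[R]_(K2,N)) :
  equiv_pair F1 Q1 F2 Q2 -> forall v, in_cone Q1 v <-> in_cone Q2 v.
Proof.
move=> [pi [pib [_ hq]]] v; have [g pg gp] := pib; split.
- case=> c [c0 ->]; exists (\row_k c 0 (pi k)); split; first by move=> k; rewrite mxE.
  apply/matrixP => i j; rewrite ord1 !mxE (reindex pi) /=; last exact: onW_bij.
  by apply: eq_bigr => k _; rewrite mxE hq.
- case=> c [c0 ->]; exists (\row_k c 0 (g k)); split; first by move=> k; rewrite mxE.
  apply/matrixP => i j; rewrite ord1 !mxE [RHS](reindex pi) /=; last exact: onW_bij.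
  by apply: eq_bigr => k _; rewrite mxE pg hq.
Qed.

Lemma rf_part (R : realType) M N K (Q : 'M[R]_(K,N)) (hK : (K < M)%N)
  (P : 'M[R]_(M,K) -> Prop) (hP : forall F, inFan F -> P F)
  (idf : forall F F', P F -> P F' -> F *m Q = F' *m Q -> equiv_pair F Q F' Q) :
  row_free Q.
Proof.
apply/idPn => nrf.
have kn0 : kermx Q != 0 by rewrite kermx_eq0.
have [r hr] : exists r, row r (kermx Q) != 0.
  case: (pickP (fun r => row r (kermx Q) != 0)) => [r hr|h]; first by exists r.
  have k0 : kermx Q = 0.
    apply/row_matrixP => r; rewrite row0; apply/eqP.
    by have := h r => /negbT /negbNE.
  by rewrite k0 eqxx in kn0.
set c := row r (kermx Q).
have cQ : c *m Q = 0 by rewrite -row_mul mulmx_ker row0.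
have [k0 hk0] : exists k, c 0 k != 0.
  case: (pickP (fun k => c 0 k != 0)) => [k hk|h]; first by exists k.
  have c0 : c = 0.
    apply/matrixP => i k; rewrite ord1 [RHS]mxE; apply/eqP.
    by have := h k => /negbT /negbNE.
  by rewrite -/c c0 eqxx in hr.
set m := \sum_k `|c 0 k|.
have cle k : `|c 0 k| <= m.
  by rewrite /m (bigD1 k) //= lerDl sumr_ge0.
have mpos : 0 < m by apply: lt_le_trans (cle k0); rewrite normr_gt0.
set d := (m *+ 2)^-1 *: c.
have dQ : d *m Q = 0 by rewrite -scalemxAl cQ scaler0.
have dle k : - (1/2) <= d 0 k <= 1/2.
  have i0 : 0 <= (m *+ 2)^-1 by rewrite invr_ge0 mulrn_wge0 // ltW.
  rewrite -ler_norml mxE normrM [`|_^-1|]ger0_norm //.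
  apply: le_trans (ler_wpM2l i0 (cle k)) _.
  have -> : (m *+ 2)^-1 * m = 1/2.
    rewrite mulr2n; field; apply/eqP => h0; move: mpos; lra.
  by [].
have m2 : m *+ 2 != 0 by rewrite mulr2n; apply/eqP => h0; move: mpos; lra.
have dne : d 0 k0 != 0 by rewrite mxE mulf_neq0 // invr_neq0.
set s0 : 'I_M := Ordinal hK.
set Fa : 'M[R]_(M,K) := \matrix_(s, k) (if (s < K)%N then (if s == k :> nat then 1/2 else 0) else 1/2).
set Fb : 'M[R]_(M,K) := \matrix_(s, k) (Fa s k + (s == s0)%:R * d 0 k).
have anc k : (widen_ord (ltnW hK) k != s0).
  by rewrite -(inj_eq val_inj) /= neq_ltn ltn_ord.
have Fa_anc k l : Fa (widen_ord (ltnW hK) k) l = if k == l then 1/2 else 0.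
  by rewrite mxE /= ltn_ord.
have Fb_anc k l : Fb (widen_ord (ltnW hK) k) l = if k == l then 1/2 else 0.
  by rewrite mxE Fa_anc (negbTE (anc k)) /= mulr0n mul0r addr0.
have Fa01 s k : 0 <= Fa s k <= 1.
  rewrite mxE; case: ifP => _; last lra.
  by case: ifP => _; lra.
have Fas0 k : Fa s0 k = 1/2 by rewrite mxE /= ltnn.
have iFa : inFan Fa.
  split; first exact: Fa01.
  move=> k; exists (widen_ord (ltnW hK) k); rewrite Fa_anc eqxx; split; first lra.
  by move=> l hl; rewrite Fa_anc eq_sym (negbTE hl).
have iFb : inFan Fb.
  split.
    move=> s k; rewrite mxE; case: (eqVneq s s0) => [->|hs].
      by rewrite Fas0 /= mulr1n mul1r; have := dle k; lra.
    by rewrite /= mulr0n mul0r addr0.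
  move=> k; exists (widen_ord (ltnW hK) k); rewrite Fb_anc eqxx; split; first lra.
  by move=> l hl; rewrite Fb_anc eq_sym (negbTE hl).
have eFQ : Fa *m Q = Fb *m Q.
  apply/matrixP => s i; rewrite !mxE.
  under [RHS]eq_bigr do rewrite mxE mulrDl.
  rewrite big_split /=.
  suff -> : \sum_(i0 < K) (s == s0)%:R * d 0 i0 * Q i0 i = 0 by rewrite addr0.
  under eq_bigr do rewrite -mulrA.
  rewrite -mulr_sumr; have := congr1 (fun X : 'rV[R]_N => X 0 i) dQ; rewrite !mxE => ->.
  by rewrite mulr0.
have [pi [_ [hF _]]] := idf _ _ (hP _ iFa) (hP _ iFb) eFQ.
have piid k : pi k = k.
  have := hF (widen_ord (ltnW hK) k) k; rewrite Fb_anc Fa_anc eqxx.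
  case: (eqVneq k (pi k)) => // ne /eqP.
  by rewrite div1r invr_eq0 pnatr_eq0.
have := hF s0 k0; rewrite piid mxE eqxx /= mulr1n mul1r Fas0 => /eqP.
by rewrite addrC -subr_eq0 addrK (negbTE dne).

Qed.

Theorem mainTheorem6 (R : realType) (M N : nat) (Mod : model R M N)
  (hM : (0 < M)%N) (hN : (0 < N)%N)
  (hsub : forall K F Q, Mod K F Q -> (0 < K)%N /\ inF F /\ inQ Q)
  (h1 : forall K F Q, Mod K F Q -> (K < M)%N)
  (h2 : forall K F Q, Mod K F Q -> forall F' : 'M[R]_(M, K), inFan F' -> Mod K F' Q) :
  identifiable Mod <->
  ((forall K1 (F1 : 'M[R]_(M, K1)) Q1 K2 (F2 : 'M[R]_(M, K2)) Q2,
      Mod K1 F1 Q1 -> Mod K2 F2 Q2 -> F1 *m Q1 = F2 *m Q2 ->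
      forall v : 'rV[R]_N, in_cone Q1 v <-> in_cone Q2 v)
   /\ (forall K F Q, Mod K F Q -> row_free Q)).
Proof.
split.
- move=> idf; split.
    move=> K1 F1 Q1 K2 F2 Q2 m1 m2 e; apply: cone_perm.
    exact: idf _ _ _ _ _ _ m1 m2 e.
  move=> K F Q m; apply: (@rf_part R M N K Q (h1 _ _ _ m) (fun F' => Mod K F' Q)).
    by move=> F' hF'; exact: h2 _ _ _ m F' hF'.
  by move=> Fa Fb ma mb e; exact: idf _ _ _ _ _ _ ma mb e.
- move=> [ha hb] K1 F1 Q1 K2 F2 Q2 m1 m2 e.
  have [_ [_ iq1]] := hsub _ _ _ m1.
  have [_ [_ iq2]] := hsub _ _ _ m2.
  exact: (@back_dir R M N K1 K2 F1 Q1 F2 Q2 iq1 iq2 (hb _ _ _ m1) (hb _ _ _ m2) (ha _ _ _ _ _ _ m1 m2 e) e).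
Qed.
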